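(* Let $k\ge1$. The generating function of spanning oriented forests of the hypercube $\{0,1\}^k$, with a weight $z$ per root and a weight $y_i^j$ for each edge changing the $i$-th coordinate to the value $j$, is $$\prod_{J\subseteq\{1,\dots,k\}}\Big(z+\sum_{i\in J}(y_i^0+y_i^1)\Big).$$
   Context: The hypercube $\{0,1\}^k$ is viewed as a directed graph with, for any two points differing in exactly one coordinate, an edge in each direction. A spanning oriented forest is a subgraph containing all vertices, with no cycle, in which every vertex has outdegree $0$ or $1$; the vertices of outdegree $0$ are its roots. Its weight is $z^{\#\text{roots}}$ times the product of the weights of its edges, where an edge changing coordinate $i$ to the value $j\in\{0,1\}$ has weight $y_i^j$; $z,y_i^j$ are indeterminates. The product is over all subsets $J$, including $J=\emptyset$. *)

(* Defs.v *)
From HB Require Import structures.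
From mathcomp Require Import all_boot all_order all_algebra.
Set Implicit Arguments. Unset Strict Implicit. Unset Printing Implicit Defensive.
Import GRing.Theory.
Local Open Scope ring_scope.

(* Vertices of the hypercube {0,1}^k : functions 'I_k -> bool
   (false = 0, true = 1; coordinate i+1 of the paper is index i : 'I_k). *)
Definition cube (k : nat) := {ffun 'I_k -> bool}.

Definition cube_adj (k : nat) (u v : cube k) : bool :=
  #|[set i : 'I_k | u i != v i]| == 1%N.

(* A subgraph in which every vertex has outdegree 0 or 1 is encoded by a
   map f : V -> option V : f v = None means v is a root (outdegree 0),
   f v = Some w means the unique out-edge is v -> w. *)
Definition forest_rel (k : nat) (f : {ffun cube k -> option (cube k)}) : rel (cube k) :=
  fun v w => f v == Some w.

Definition spanning_oriented_forest (k : nat)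
  (f : {ffun cube k -> option (cube k)}) : bool :=
  [forall v : cube k, forall w : cube k, (f v == Some w) ==> cube_adj v w] &&
  [forall v : cube k, forall w : cube k,
     forest_rel f v w ==> ~~ connect (forest_rel f) w v].

(* Weight of the edge u -> v: the edge changes the unique coordinate i where
   u and v differ to the value v i, so its weight is y i (v i)
   (the product below has exactly one factor when u, v are adjacent). *)
Definition edge_weight (R : comPzRingType) (k : nat) (y : 'I_k -> bool -> R)
  (u v : cube k) : R :=
  \prod_(i : 'I_k | u i != v i) y i (v i).

Definition forest_weight (R : comPzRingType) (k : nat) (z : R) (y : 'I_k -> bool -> R)
  (f : {ffun cube k -> option (cube k)}) : R :=
  \prod_(v : cube k) (if f v is Some w then edge_weight y v w else z).

(* Main.v *)
Require Import Defs.
From HB Require Import structures.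
From mathcomp Require Import all_boot all_order all_algebra.
Set Implicit Arguments. Unset Strict Implicit. Unset Printing Implicit Defensive.
Import GRing.Theory.
Local Open Scope ring_scope.

Definition nxt (T : finType) (f : {ffun T -> option T}) (o : option T) : option T :=
  if o is Some v then f v else None.
Definition term (T : finType) (f : {ffun T -> option T}) (o : option T) :=
  exists m, iter m (nxt f) o = None.
Definition acyc (T : finType) (f : {ffun T -> option T}) : bool :=
  [forall v, iter #|T| (nxt f) (Some v) == None].

Lemma nxtS (T : finType) (f : {ffun T -> option T}) v : nxt f (Some v) = f v.
Proof. by []. Qed.

Lemma iter_None (T : finType) (f : {ffun T -> option T}) m :
  iter m (nxt f) None = None.
Proof. by elim: m => //= m ->. Qed.

Lemma iter_mono (T : finType) (f : {ffun T -> option T}) o m m' :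
  iter m (nxt f) o = None -> (m <= m')%N -> iter m' (nxt f) o = None.
Proof.
move=> h le; rewrite -(subnK le) iterD h; exact: iter_None.
Qed.

Lemma term_bound (T : finType) (f : {ffun T -> option T}) o :
  term f o -> iter #|T| (nxt f) o = None.
Proof.
case=> m0 Hm0; case: o Hm0 => [v|] Hm0; last exact: iter_None.
case E: (iter #|T| (nxt f) (Some v)) => [x|] //; exfalso.
have allS : forall i, (i <= #|T|)%N -> iter i (nxt f) (Some v) != None.
  move=> i le; apply/eqP=> h; by rewrite (iter_mono h le) in E.
pose g (i : 'I_(#|T|.+1)) := odflt v (iter i (nxt f) (Some v)).
have gE : forall i : 'I_(#|T|.+1), iter i (nxt f) (Some v) = Some (g i).
  move=> i; rewrite /g; have := allS i (ltn_ord i).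
  by case: (iter _ _ _).
suff: injective g.
  by move/leq_card; rewrite card_ord ltnn.
have key : forall i j : nat, (i < j <= #|T|)%N ->
   iter i (nxt f) (Some v) = iter j (nxt f) (Some v) -> False.
  move=> i j /andP [lij ljT] eqij.
  suff : forall m, iter m (nxt f) (Some v) != None by move/(_ m0)/eqP.
  elim/ltn_ind=> m IH.
  case: (leqP m #|T|) => hm; first exact: allS.
  have ljm : (j <= m)%N by apply: leq_trans ljT (ltnW hm).
  have -> : iter m (nxt f) (Some v) = iter (m - j + i) (nxt f) (Some v).
    by rewrite iterD eqij -iterD subnK.
  apply: IH. 
  by rewrite -{2}(subnK ljm) ltn_add2l.
move=> i j eqg.
have eq : iter i (nxt f) (Some v) = iter j (nxt f) (Some v) by rewrite !gE eqg.
apply/val_inj => /=.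
case: (ltngtP i j) => // h.
- exfalso; apply: (key i j) => //; rewrite h; exact: (ltn_ord j).
- exfalso; apply: (key j i) => //; rewrite h; exact: (ltn_ord i).
Qed.

Lemma acycP (T : finType) (f : {ffun T -> option T}) :
  reflect (forall v, term f (Some v)) (acyc f).
Proof.
apply: (iffP forallP) => h v.
- by exists #|T|; apply/eqP.
- by apply/eqP; apply: term_bound.
Qed.

Lemma big_opt (R : Type) (idx : R) (op : Monoid.com_law idx) (T : finType) (F : option T -> R) :
  \big[op/idx]_(c : option T) F c = op (F None) (\big[op/idx]_(t : T) F (Some t)).
Proof.
rewrite (perm_big (None :: map Some (index_enum T))) /=.
  by rewrite big_cons big_map.
apply: uniq_perm; first exact: index_enum_uniq.
  rewrite /= map_inj_uniq ?index_enum_uniq //; last by move=> ? ? [].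
  by rewrite andbT; apply/mapP => -[].
by case=> [x|]; rewrite mem_index_enum // in_cons /= (mem_map (@Some_inj _)) mem_index_enum.
Qed.

Section Forest.
Variable R : comPzRingType.

Definition wt (T : finType) (w : T -> T -> R) (z : T -> R) (f : {ffun T -> option T}) : R :=
  \prod_v (if f v is Some u then w v u else z v).
Definition Fs (T : finType) (w : T -> T -> R) (z : T -> R) : R :=
  \sum_(f : {ffun T -> option T} | acyc f) wt w z f.

Definition collp n (p : option 'I_n) (c : option 'I_n.+1) : option 'I_n :=
  if c is Some v then (if unlift ord0 v is Some y then Some y else p) else None.
Definition liftp n (p : option 'I_n) : option 'I_n.+1 := omap (lift ord0) p.
Definition fcons n (a : option 'I_n.+1) (h : {ffun 'I_n -> option 'I_n.+1}) :
  {ffun 'I_n.+1 -> option 'I_n.+1} :=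
  [ffun i => if unlift ord0 i is Some j then h j else a].
Definition gcoll n (p : option 'I_n) (h : {ffun 'I_n -> option 'I_n.+1}) :
  {ffun 'I_n -> option 'I_n} := [ffun x => collp p (h x)].

Lemma collp_lift n (p : option 'I_n) y : collp p (Some (lift ord0 y)) = Some y.
Proof. by rewrite /= liftK. Qed.
Lemma collp_0 n (p : option 'I_n) : collp p (Some ord0) = p.
Proof. by rewrite /= unlift_none. Qed.
Lemma collp_liftp n (p : option 'I_n) : collp p (liftp p) = p.
Proof. by case: p => [u|] //=; rewrite liftK. Qed.
Lemma liftp_neq0 n (p : option 'I_n) : liftp p != Some ord0.
Proof. by case: p => [u|] //=; apply/eqP => -[] /eqP; rewrite eq_sym (negbTE (neq_lift _ _)). Qed.
Lemma fcons0 n a (h : {ffun 'I_n -> option 'I_n.+1}) : fcons a h ord0 = a.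
Proof. by rewrite ffunE unlift_none. Qed.
Lemma fconsL n a (h : {ffun 'I_n -> option 'I_n.+1}) x : fcons a h (lift ord0 x) = h x.
Proof. by rewrite ffunE liftK. Qed.

Section Coll.
Variables (n : nat) (p : option 'I_n) (h : {ffun 'I_n -> option 'I_n.+1}).
Let f := fcons (liftp p) h.
Let g := gcoll p h.

Lemma step1 s : s != Some ord0 -> collp p (nxt f s) = nxt g (collp p s).
Proof.
case: s => [v|] //= nv.
case: (unliftP ord0 v) nv => [x ->|->] //= _.
by rewrite /f fconsL /g ffunE.
Qed.

Lemma simA m s : s != Some ord0 -> iter m (nxt g) (collp p s) = None -> term f s.
Proof.
elim: m s => [|m IH] s ns.
  rewrite /=; case: s ns => [v|] ns; last by exists 0.
  by case: (unliftP ord0 v) ns => [x ->|->] //=; rewrite liftK.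
rewrite iterSr -step1 //.
case E: (nxt f s == Some ord0).
  move/eqP: E => E; rewrite E collp_0 -{1}(collp_liftp p) => H.
  have [m' Hm'] := IH _ (liftp_neq0 p) H.
  exists m'.+2; rewrite !iterSr E /= /f fcons0 //.
move/negbT: E => E H; have [m' Hm'] := IH _ E H.
by exists m'.+1; rewrite iterSr.
Qed.

Lemma simB m s : iter m (nxt f) s = None -> term g (collp p s).
Proof.
elim: m s => [|m IH] s; first by move=> /= ->; exists 0.
rewrite iterSr => /IH.
case E: (s == Some ord0).
  by move/eqP: E => ->; rewrite collp_0 nxtS /f fcons0 collp_liftp.
rewrite step1 ?E // => -[m' Hm']; exists m'.+1; by rewrite iterSr.
Qed.

Lemma acyc_fcons : acyc f = acyc g.
Proof.
apply/acycP/acycP => H.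
  move=> x; rewrite -(collp_lift p x); have [m Hm] := H (lift ord0 x).
  exact: simB Hm.
have tp : term g p by case: p => [u|]; [exact: H | exists 0].
have tl : term f (liftp p).
  case: tp => m Hm; apply: (simA (m := m)); first exact: liftp_neq0.
  by rewrite collp_liftp.
move=> v; case: (unliftP ord0 v) => [x ->|->].
  have [m Hm] := H x; apply: (simA (m := m)).
    exact: (liftp_neq0 (Some x)).
  by rewrite collp_lift.
case: tl => m Hm; exists m.+1; by rewrite iterSr /= /f fcons0.
Qed.
End Coll.

Lemma acyc_fcons00 n (h : {ffun 'I_n -> option 'I_n.+1}) : acyc (fcons (Some ord0) h) = false.
Proof.
apply/acycP => H; have [m Hm] := H ord0.
suff : iter m (nxt (fcons (Some ord0) h)) (Some ord0) = Some ord0 by rewrite Hm.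
by elim: m {Hm} => // m IH; rewrite iterS IH nxtS fcons0.
Qed.
End Forest.

Lemma sum_opt (R : nmodType) (T : finType) (F : option T -> R) :
  \sum_(c : option T) F c = F None + \sum_(t : T) F (Some t).
Proof. exact: big_opt. Qed.

Lemma collp_None n (p : option 'I_n) : collp p None = None.
Proof. by []. Qed.

Definition Mx (R : comPzRingType) n (w : 'I_n -> 'I_n -> R) (z : 'I_n -> R) : 'M[R]_n :=
  \matrix_(i, j) if i == j then z i + \sum_(u | u != i) w i u else - w i j.

Lemma lift0_rshift n (i : 'I_n) : lift ord0 i = rshift 1 i :> 'I_(1 + n).
Proof. by apply/val_inj. Qed.
Lemma ord0_lshift n : (ord0 : 'I_(1 + n)) = lshift n (ord0 : 'I_1).
Proof. by apply/val_inj. Qed.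
Lemma split_rshift m n (j : 'I_n) : split (rshift m j) = inr j.
Proof. exact: (unsplitK (inr j)). Qed.
Lemma split_lshift m n (j : 'I_m) : split (lshift n j) = inl j.
Proof. exact: (unsplitK (inl j)). Qed.

Section Rec.
Variable R : comPzRingType.
Variables (n : nat) (w : 'I_n.+1 -> 'I_n.+1 -> R) (z : 'I_n.+1 -> R).

Definition wp (p : option 'I_n) (x y : 'I_n) : R :=
  w (lift ord0 x) (lift ord0 y) + (if p == Some y then w (lift ord0 x) ord0 else 0).
Definition zp (p : option 'I_n) (x : 'I_n) : R :=
  z (lift ord0 x) + (if p == None then w (lift ord0 x) ord0 else 0).
Definition Wx (x : 'I_n) (c : option 'I_n.+1) : R :=
  if c is Some u then w (lift ord0 x) u else z (lift ord0 x).

Lemma fiber p x (o : option 'I_n) :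
  \sum_(c | collp p c == o) Wx x c = if o is Some y then wp p x y else zp p x.
Proof.
rewrite big_mkcond sum_opt big_ord_recl collp_0 collp_None.
under eq_bigr => y _ do rewrite collp_lift.
case: o => [y|].
- rewrite [None == _]/= add0r (eq_bigr (fun y' => if y' == y then w (lift ord0 x) (lift ord0 y') else 0)); last first.
    by move=> yy _.
  rewrite -big_mkcond big_pred1_eq /wp addrC /Wx.
  by case: eqP.
- rewrite big1 ?addr0; last by [].
  by rewrite /zp /Wx; case: eqP.
Qed.

Lemma wt_fcons a h :
  wt w z (fcons a h) = (if a is Some u then w ord0 u else z ord0) * \prod_x Wx x (h x).
Proof.
rewrite /wt big_ord_recl fcons0; congr (_ * _); apply: eq_bigr => x _.
by rewrite fconsL.
Qed.

Lemma G_eq p :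
  \sum_(h | acyc (fcons (liftp p) h)) wt w z (fcons (liftp p) h)
  = (if liftp p is Some u then w ord0 u else z ord0) * Fs (wp p) (zp p).
Proof.
under eq_bigr => h _ do rewrite wt_fcons.
rewrite -big_distrr /=; congr (_ * _).
under eq_bigl => h do rewrite acyc_fcons.
rewrite (partition_big (gcoll p) (fun g => acyc g)) //=.
apply: eq_bigr => g ag.
symmetry; rewrite /wt.
under eq_bigr => v _ do rewrite -(fiber p v (g v)).
rewrite (bigA_distr_big_dep (fun v c => collp p c == g v)).
apply: eq_bigl => h; apply/familyP/andP => [H | [_ /eqP <-] x]; last by rewrite unfold_in /= ffunE.
have eg : gcoll p h = g by apply/ffunP => x; rewrite ffunE; have := H x; rewrite unfold_in /= => /eqP.
by rewrite eg ag.
Qed.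

Lemma Fs_rec : Fs w z = z ord0 * Fs (wp None) (zp None)
  + \sum_u w ord0 (lift ord0 u) * Fs (wp (Some u)) (zp (Some u)).
Proof.
rewrite /Fs (reindex (fun q : option 'I_n.+1 * {ffun 'I_n -> option 'I_n.+1} => fcons q.1 q.2)) /=; last first.
  apply: onW_bij; exists (fun f : {ffun 'I_n.+1 -> option 'I_n.+1} => (f ord0, [ffun x : 'I_n => f (lift ord0 x)])).
    by case=> a h /=; rewrite fcons0; congr pair; apply/ffunP => x; rewrite ffunE fconsL.
  move=> f; apply/ffunP => i; rewrite ffunE.
  by case: (unliftP ord0 i) => [j ->|->] //=; rewrite ffunE.
rewrite (eq_bigl (fun q => xpredT q.1 && acyc (fcons q.1 q.2))) //.
rewrite -(pair_big_dep xpredT (fun a h => acyc (fcons a h)) (fun a h => wt w z (fcons a h))) /=.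
rewrite sum_opt big_ord_recl.
rewrite (eq_bigl xpred0 _ (fun h => acyc_fcons00 h)) big_pred0_eq add0r.
congr (_ + _); first exact: (G_eq None).
by apply: eq_bigr => u _; exact: (G_eq (Some u)).
Qed.

Lemma DE (B : 'M[R]_(n, 1 + n)) (v : 'rV[R]_(1 + n)) :
  \det (col_mx v B) = \sum_j v 0 j * cofactor (col_mx 0 B) ord0 j.
Proof.
rewrite (expand_det_row _ ord0); apply: eq_bigr => j _.
rewrite {1}(ord0_lshift n) (col_mxEu v B); congr (_ * _).
rewrite /cofactor; congr (_ * \det _); apply/matrixP => a b; rewrite !mxE.
by rewrite (_ : split (lift ord0 a : 'I_(1 + n)) = inr a) //; apply: (canLR unsplitK); exact/val_inj.
Qed.

Lemma sum_lift (F : 'I_n.+1 -> R) i :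
  \sum_(v | v != lift ord0 i) F v = F ord0 + \sum_(y | y != i) F (lift ord0 y).
Proof.
rewrite big_mkcond big_ord_recl /= [in RHS]big_mkcond; congr (_ + _).
Qed.

Lemma Mx_ll i j : Mx w z (lift ord0 i) (lift ord0 j) =
  if i == j then zp None i + \sum_(y | y != i) w (lift ord0 i) (lift ord0 y)
  else - w (lift ord0 i) (lift ord0 j).
Proof.
rewrite mxE (inj_eq lift_inj); case: eqP => [->|] //.
by rewrite sum_lift /zp eqxx addrA.
Qed.

Lemma Mx_l0 i : Mx w z (lift ord0 i) ord0 = - w (lift ord0 i) ord0.
Proof. by rewrite mxE eq_sym (negbTE (neq_lift _ _)). Qed.

Lemma Mx_0l i : Mx w z ord0 (lift ord0 i) = - w ord0 (lift ord0 i).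
Proof. by rewrite mxE (negbTE (neq_lift _ _)). Qed.

Lemma Mx_00 : Mx w z ord0 ord0 = z ord0 + \sum_u w ord0 (lift ord0 u).
Proof.
rewrite mxE eqxx; congr (_ + _).
by rewrite big_mkcond big_ord_recl /= add0r.
Qed.

Lemma Br_entry i j : rsubmx (dsubmx (Mx w z : 'M_(1 + n))) i j = Mx w z (lift ord0 i) (lift ord0 j).
Proof. by rewrite mxE [in LHS]mxE; congr (Mx w z _ _); exact/val_inj. Qed.

Lemma Bl_entry i : lsubmx (dsubmx (Mx w z : 'M_(1 + n))) i 0 = Mx w z (lift ord0 i) ord0.
Proof. by rewrite mxE [in LHS]mxE; congr (Mx w z _ _); exact/val_inj. Qed.

Lemma U_entry (i : 'I_1) j : usubmx (Mx w z : 'M_(1 + n)) i j = Mx w z ord0 j.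
Proof. by rewrite mxE; congr (Mx w z _ _); apply/val_inj; case: i => -[]. Qed.

Lemma rowmx_0 (A : 'M[R]_1) (C : 'M[R]_(1, n)) : row_mx A C 0 (ord0 : 'I_(1 + n)) = A 0 0.
Proof. by rewrite (ord0_lshift n) row_mxEl. Qed.

Lemma rowmx_l (A : 'M[R]_1) (C : 'M[R]_(1, n)) u : row_mx A C 0 (lift ord0 u : 'I_(1 + n)) = C 0 u.
Proof. by rewrite (lift0_rshift u) row_mxEr. Qed.


Lemma wpN x y : wp None x y = w (lift ord0 x) (lift ord0 y).
Proof. by rewrite /wp addr0. Qed.

Lemma sum_ne_eq (i u : 'I_n) (c : R) :
  \sum_(y | y != i) (if Some u == Some y then c else 0) = if u != i then c else 0.
Proof.
rewrite big_mkcond (eq_bigr (fun y => if y == u then (if u != i then c else 0) else 0)).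
  by rewrite -big_mkcond big_pred1_eq.
move=> y _.
case: (y =P u) => [->|ne]; first by rewrite eqxx.
rewrite (_ : (Some u == Some y) = false); first by case: ifP.
by apply/eqP => -[e]; apply: ne; rewrite e.
Qed.

Lemma det_rec : \det (Mx w z) = z ord0 * \det (Mx (wp None) (zp None))
  + \sum_u w ord0 (lift ord0 u) * \det (Mx (wp (Some u)) (zp (Some u))).
Proof.
pose M : 'M[R]_(1 + n) := Mx w z.
pose B := dsubmx M.
pose K j := cofactor (col_mx 0 B) ord0 j.
have BrE : rsubmx B = Mx (wp None) (zp None).
  apply/matrixP => i j; rewrite /B /M Br_entry Mx_ll [RHS]mxE.
  case: eqP => [->|] //; last by rewrite wpN.
  by congr (_ + _); apply: eq_bigr => y _; rewrite wpN.
have e0 : \det (Mx (wp None) (zp None)) = K ord0.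
  rewrite -BrE -[\det (rsubmx B)]mul1r -{1}(@det1 R 1) -(det_lblock _ (lsubmx B)) block_mxEv hsubmxK DE.
  rewrite big_ord_recl rowmx_0 mxE /= mulr1n mul1r big1 ?addr0 //.
  by move=> u _; rewrite rowmx_l mxE mul0r.
have eu : forall u, \det (Mx (wp (Some u)) (zp (Some u))) = K ord0 - K (lift ord0 u).
  move=> u; pose e : 'M[R]_(1, n) := delta_mx 0 u.
  have BE : lsubmx B *m e + rsubmx B = Mx (wp (Some u)) (zp (Some u)).
    have Ble : forall i, lsubmx B i ord0 = - w (lift ord0 i) ord0 by move=> i; rewrite /B /M Bl_entry Mx_l0.
    apply/matrixP => i j; rewrite !mxE big_ord1 Ble /e !mxE -!lift0_rshift (inj_eq lift_inj) eqxx /=.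
    case: (i =P j) => [<-|ne].
      rewrite sum_lift /zp /wp big_split /= sum_ne_eq addr0.
      case: (i =P u) => [->|/eqP ne]; rewrite ?eqxx /= ?mulr1n ?mulr0n.
        by rewrite mulr1 addr0 addrCA addKr.
      have -> : (u != i) = true by rewrite eq_sym.
      by rewrite mulr0 add0r (addrC (w (lift ord0 i) ord0)).
    rewrite /wp opprD addrC; congr (_ + _).
    case: (j =P u) => [->|nju]; first by rewrite eqxx /= mulr1.
    rewrite (_ : (Some u == Some j) = false) ?mulr0 ?oppr0 //.
    by apply/eqP => -[ee]; apply: nju; rewrite ee.
  rewrite -BE -[\det (_ + _)]mul1r -{1}(@det1 R 1) -(det_lblock _ (lsubmx B)).
  have -> : block_mx 1%:M 0 (lsubmx B) (lsubmx B *m e + rsubmx B) =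
      block_mx 1%:M (- e) (lsubmx B) (rsubmx B) *m block_mx 1%:M e 0 1%:M.
    rewrite mulmx_block !mulmx1 !mulmx0 !mul1mx !addr0 addrN.
    by rewrite addrC.
  rewrite det_mulmx det_ublock !det1 mulr1 block_mxEv hsubmxK DE.
  rewrite big_ord_recl rowmx_0 mxE /= mulr1n mul1r.
  rewrite (bigD1 u) //= big1 ?addr0.
    by rewrite rowmx_l !mxE !eqxx /= mulr1n mulN1r mulr1.
  by move=> v nv; rewrite rowmx_l !mxE !eqxx (negbTE nv) /= oppr0 mul0r.
have -> : \det (Mx w z) = \det (col_mx (usubmx M) B) by rewrite vsubmxK.
have U0 : usubmx M 0 ord0 = z ord0 + \sum_u w ord0 (lift ord0 u) by rewrite /M U_entry Mx_00.
have Ul : forall u : 'I_n, usubmx M 0 (lift ord0 u : 'I_n.+1) = - w ord0 (lift ord0 u) by move=> u; rewrite /M U_entry Mx_0l.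
rewrite DE big_ord_recl.
rewrite (eq_bigr (fun u => - w ord0 (lift ord0 u) * K (lift ord0 u))); last first.
  by move=> u _ /=; congr (_ * _); exact: Ul.
rewrite U0 e0.
under [in RHS]eq_bigr => u _ do rewrite eu.
rewrite mulrDl big_distrl /= -addrA; congr (_ + _); rewrite -big_split /=.
by apply: eq_bigr => u _; rewrite mulrBr mulNr.
Qed.
End Rec.

Theorem forest_det (R : comPzRingType) n (w : 'I_n -> 'I_n -> R) (z : 'I_n -> R) :
  \det (Mx w z) = Fs w z.
Proof.
elim: n w z => [|n IH] w z.
  rewrite det_mx00 /Fs (big_pred1 [ffun i : 'I_0 => None]).
    by rewrite /wt big_ord0.
  move=> f /=.
  have -> : f = [ffun i : 'I_0 => None] by apply/ffunP => -[].
  by rewrite eqxx; apply/forallP => -[].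
rewrite det_rec Fs_rec IH; congr (_ + _).
by apply: eq_bigr => u _; rewrite IH.
Qed.

Section Transfer.
Variables (R : comPzRingType) (T1 T2 : finType) (e : T1 -> T2) (e' : T2 -> T1).
Hypotheses (ee' : cancel e e') (e'e : cancel e' e).

Definition hconj (f1 : {ffun T1 -> option T1}) : {ffun T2 -> option T2} :=
  [ffun v => omap e (f1 (e' v))].

Lemma iter_hconj f1 m s :
  iter m (nxt (hconj f1)) (omap e s) = omap e (iter m (nxt f1) s).
Proof.
elim: m => //= m ->.
by case: (iter m (nxt f1) s) => [a|] //=; rewrite ffunE ee'.
Qed.

Lemma acyc_hconj f1 : acyc (hconj f1) = acyc f1.
Proof.
apply/acycP/acycP => H v.
  have [m Hm] := H (e v); exists m.
  by move: Hm; rewrite -[Some (e v)]/(omap e (Some v)) iter_hconj; case: (iter _ _ _).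
have [m Hm] := H (e' v); exists m.
by rewrite -(e'e v) -[Some (e (e' v))]/(omap e (Some (e' v))) iter_hconj Hm.
Qed.

Lemma Fs_transfer (w : T2 -> T2 -> R) (z : T2 -> R) :
  Fs (fun a b => w (e a) (e b)) (fun a => z (e a)) = Fs w z.
Proof.
rewrite /Fs (reindex hconj); last first.
  apply: onW_bij; exists (fun f2 : {ffun T2 -> option T2} => [ffun a => omap e' (f2 (e a))]).
    move=> f1; apply/ffunP => a; rewrite !ffunE ee'.
    by case: (f1 a) => [b|] //=; rewrite ee'.
  move=> f2; apply/ffunP => v; rewrite !ffunE e'e.
  by case: (f2 v) => [b|] //=; rewrite e'e.
apply: eq_big => f1; first by rewrite acyc_hconj.
move=> _; rewrite /wt (reindex e) /=; last first.
  by apply: onW_bij; exists e'.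
apply: eq_bigr => a _; rewrite ffunE ee'.
by case: (f1 a).
Qed.
End Transfer.

Section CubeForest.
Variable k : nat.
Implicit Type f : {ffun cube k -> option (cube k)}.

Lemma connect_iter f a b :
  connect (forest_rel f) a b -> exists m, iter m (nxt f) (Some a) = Some b.
Proof.
case/connectP => p; elim: p a => [|x p IH] a /=; first by move=> _ ->; exists 0.
case/andP => /eqP fa pp lb; have [m Hm] := IH x pp lb.
by exists m.+1; rewrite iterSr nxtS fa.
Qed.

Lemma noloop_acyc f :
  [forall v, forall w, forest_rel f v w ==> ~~ connect (forest_rel f) w v] = acyc f.
Proof.
apply/idP/idP.
- move=> H; apply/acycP => v.
  pose r v := #|[set x | connect (forest_rel f) v x]|.
  suff : forall N v, (r v <= N)%N -> term f (Some v) by move/(_ (r v) v (leqnn _)).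
  elim=> [|N IH] {}v hN.
    have vin : v \in [set x | connect (forest_rel f) v x] by rewrite inE connect0.
    by move: hN; rewrite leqn0 cards_eq0 => /eqP E; rewrite E inE in vin.
  case E: (f v) => [w|]; last by exists 1.
  have edge : forest_rel f v w by rewrite /forest_rel E.
  have ncon : ~~ connect (forest_rel f) w v.
    by have := forallP (forallP H v) w; rewrite edge.
  have lt : (r w < r v)%N.
    apply: proper_card; apply/properP; split.
      apply/subsetP => x; rewrite !inE => cwx.
      exact: connect_trans (connect1 edge) cwx.
    by exists v; rewrite !inE ?connect0.
  have [m Hm] := IH w (leq_trans lt hN).
  by exists m.+1; rewrite iterSr nxtS E.
- move=> H; apply/forallP => v; apply/forallP => w; apply/implyP => /eqP fvw.
  apply/negP => /connect_iter [m Hm].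
  have per : forall t, iter (t * m.+1) (nxt f) (Some v) = Some v.
    elim=> // t IHt; rewrite mulSn iterD IHt iterSr nxtS fvw //.
  move/acycP: H => /(_ v) [m0 Hm0].
  have := iter_mono Hm0 (leq_pmulr m0 (ltn0Sn m)).
  by rewrite per.
Qed.
End CubeForest.

Definition wA (R : comPzRingType) k (y : 'I_k -> bool -> R) (u v : cube k) : R :=
  if cube_adj u v then edge_weight y u v else 0.

Lemma lhs_Fs (R : comPzRingType) k (y : 'I_k -> bool -> R) (z : R) :
  \sum_(f : {ffun cube k -> option (cube k)} | spanning_oriented_forest f) forest_weight z y f
  = Fs (wA y) (fun _ => z).
Proof.
rewrite /Fs [RHS](bigID (fun f : {ffun cube k -> option (cube k)} =>
   [forall v, forall w, (f v == Some w) ==> cube_adj v w])) /=.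
rewrite [X in _ + X]big1 ?addr0.
  apply: eq_big => f; first by rewrite /spanning_oriented_forest noloop_acyc andbC.
  move=> /andP[adj _]; apply: eq_bigr => v _; case E: (f v) => [w|] //.
  by rewrite /wA (implyP (forallP (forallP adj v) w)) // E.
move=> f /andP[_]; rewrite negb_forall => /existsP [v].
rewrite negb_forall => /existsP [w]; rewrite negb_imply => /andP [/eqP fv nadj].
by rewrite /wt (bigD1 v) //= fv /wA (negbTE nadj) mul0r.
Qed.

Fixpoint pw (k : nat) : nat := if k is k'.+1 then pw k' + pw k' else 1.

Definition ext k (c : cube k) (b : bool) : cube k.+1 :=
  [ffun i => if unlift ord0 i is Some j then c j else b].
Definition tl k (c : cube k.+1) : cube k := [ffun j => c (lift ord0 j)].

Lemma ext0 k (c : cube k) b : ext c b ord0 = b.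
Proof. by rewrite ffunE unlift_none. Qed.
Lemma extL k (c : cube k) b j : ext c b (lift ord0 j) = c j.
Proof. by rewrite ffunE liftK. Qed.
Lemma tl_ext k (c : cube k) b : tl (ext c b) = c.
Proof. by apply/ffunP => j; rewrite ffunE extL. Qed.
Lemma ext_tl k (c : cube k.+1) : ext (tl c) (c ord0) = c.
Proof.
apply/ffunP => i; rewrite ffunE.
by case: (unliftP ord0 i) => [j ->|->] //; rewrite ffunE.
Qed.

Unset Implicit Arguments.
Fixpoint phi k : 'I_(pw k) -> cube k :=
  match k return 'I_(pw k) -> cube k with
  | 0 => fun _ => [ffun _ => false]
  | k'.+1 => fun i => match split i with
                      | inl a => ext (phi k' a) false
                      | inr b => ext (phi k' b) true end
  end.

Fixpoint psi k : cube k -> 'I_(pw k) :=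
  match k return cube k -> 'I_(pw k) with
  | 0 => fun _ => ord0
  | k'.+1 => fun c => if c ord0 then rshift (pw k') (psi k' (tl c))
                      else lshift (pw k') (psi k' (tl c))
  end.

Set Implicit Arguments.

Lemma phiL k a : phi k.+1 (lshift (pw k) a) = ext (phi k a) false.
Proof. by rewrite /= split_lshift. Qed.
Lemma phiR k a : phi k.+1 (rshift (pw k) a) = ext (phi k a) true.
Proof. by rewrite /= split_rshift. Qed.

Lemma phiK k : cancel (psi k) (phi k).
Proof.
elim: k => [|k IH] c.
  by apply/ffunP => -[].
rewrite /=; case E: (c ord0).
  by rewrite split_rshift IH -E ext_tl.
by rewrite split_lshift IH -E ext_tl.
Qed.

Lemma psiK k : cancel (phi k) (psi k).
Proof.
elim: k => [|k IH] i.
  by rewrite (ord1 i).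
rewrite -[i]splitK; case: (split i) => [a|a].
  by rewrite [unsplit _]/= phiL /= ext0 tl_ext IH.
by rewrite [unsplit _]/= phiR /= ext0 tl_ext IH.
Qed.

Definition yl (R : comPzRingType) k (y : 'I_k.+1 -> bool -> R) : 'I_k -> bool -> R :=
  fun j => y (lift ord0 j).

Lemma card_setS k (P : pred 'I_k.+1) :
  #|[set i | P i]| = ((if P ord0 then 1 else 0) + #|[set j : 'I_k | P (lift ord0 j)]|)%N.
Proof.
rewrite -!sum1_card big_mkcond big_ord_recl /= inE [in RHS]big_mkcond /=; congr addn.
by apply: eq_bigr => j _; rewrite !inE.
Qed.

Lemma set_diff0 k (c c' : cube k) : ([set j | c j != c' j] == set0) = (c == c').
Proof.
apply/eqP/eqP => [H|->].
  apply/ffunP => j; apply/eqP/negPn; apply/negP => hj.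
  by have := in_set0 j; rewrite -H inE hj.
by apply/setP => j; rewrite !inE eqxx.
Qed.

Lemma adj_ext k (c c' : cube k) b1 b2 :
  cube_adj (ext c b1) (ext c' b2) = if b1 == b2 then cube_adj c c' else c == c'.
Proof.
rewrite /cube_adj card_setS !ext0.
have -> : [set j | ext c b1 (lift ord0 j) != ext c' b2 (lift ord0 j)] = [set j | c j != c' j].
  by apply/setP => j; rewrite !inE !extL.
by case: b1; case: b2 => //=; rewrite ?add0n // add1n eqSS cards_eq0 set_diff0.
Qed.

Section EW.
Variable R : comPzRingType.

Lemma edge_ext k (y : 'I_k.+1 -> bool -> R) (c c' : cube k) b1 b2 :
  edge_weight y (ext c b1) (ext c' b2) = (if b1 != b2 then y ord0 b2 else 1) * edge_weight (yl y) c c'.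
Proof.
rewrite /edge_weight big_mkcond big_ord_recl !ext0 [in RHS]big_mkcond /=; congr (_ * _).
by apply: eq_bigr => j _; rewrite !extL.
Qed.

Lemma wA_ext k (y : 'I_k.+1 -> bool -> R) (c c' : cube k) b1 b2 :
  wA y (ext c b1) (ext c' b2) =
  if b1 == b2 then wA (yl y) c c' else (if c == c' then y ord0 b2 else 0).
Proof.
rewrite /wA adj_ext edge_ext.
have e1 : edge_weight (yl y) c c = 1 by rewrite /edge_weight big_pred0 // => j; rewrite eqxx.
by case: b1; case: b2 => /=; rewrite ?mul1r //; case: eqP => [<-|]; rewrite ?e1 ?mulr1.
Qed.
End EW.

Section Block.
Variable R : comPzRingType.

Definition Wq k (y : 'I_k -> bool -> R) (i j : 'I_(pw k)) : R := wA y (phi k i) (phi k j).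
Definition Mq k (y : 'I_k -> bool -> R) (z : R) : 'M[R]_(pw k) := Mx (Wq y) (fun _ => z).

Lemma Mx_shift n (w : 'I_n -> 'I_n -> R) (z s : R) :
  Mx w (fun _ => z) + s%:M = Mx w (fun _ => z + s).
Proof.
apply/matrixP => i j; rewrite !mxE; case: eqP => _ /=.
  by rewrite mulr1n addrAC.
by rewrite mulr0n addr0.
Qed.

Variables (k : nat) (y : 'I_k.+1 -> bool -> R).

Lemma phi_inj : injective (phi k).
Proof. exact: can_inj (@psiK k). Qed.

Lemma WqLL a b : Wq y (lshift (pw k) a) (lshift (pw k) b) = Wq (yl y) a b.
Proof. by rewrite /Wq !phiL wA_ext. Qed.
Lemma WqRR a b : Wq y (rshift (pw k) a) (rshift (pw k) b) = Wq (yl y) a b.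
Proof. by rewrite /Wq !phiR wA_ext. Qed.
Lemma WqLR a b : Wq y (lshift (pw k) a) (rshift (pw k) b) = if a == b then y ord0 true else 0.
Proof. by rewrite /Wq phiL phiR wA_ext /= (inj_eq phi_inj). Qed.
Lemma WqRL a b : Wq y (rshift (pw k) a) (lshift (pw k) b) = if a == b then y ord0 false else 0.
Proof. by rewrite /Wq phiL phiR wA_ext /= (inj_eq phi_inj). Qed.

Lemma sum_delta (t : R) (a : 'I_(pw k)) : \sum_u (if a == u then t else 0) = t.
Proof.
rewrite (eq_bigr (fun u => if u == a then t else 0)) => [|u _]; last by rewrite eq_sym.
by rewrite -big_mkcond big_pred1_eq.
Qed.

Lemma diagL a : \sum_(u | u != lshift (pw k) a) Wq y (lshift (pw k) a) u
  = \sum_(u | u != a) Wq (yl y) a u + y ord0 true.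
Proof.
rewrite big_split_ord /=; congr (_ + _).
  by apply: eq_big => u; [rewrite eq_lshift | rewrite WqLL].
rewrite -[RHS](sum_delta (y ord0 true) a); apply: eq_big => u; first by rewrite eq_rlshift.
by rewrite WqLR.
Qed.

Lemma diagR a : \sum_(u | u != rshift (pw k) a) Wq y (rshift (pw k) a) u
  = \sum_(u | u != a) Wq (yl y) a u + y ord0 false.
Proof.
rewrite big_split_ord /= addrC; congr (_ + _).
  by apply: eq_big => u; [rewrite eq_rshift | rewrite WqRR].
rewrite -[RHS](sum_delta (y ord0 false) a); apply: eq_big => u; first by rewrite eq_lrshift.
by rewrite WqRL.
Qed.

Lemma Mq_block (z : R) : Mq y z =
  block_mx (Mq (yl y) z + (y ord0 true)%:M) (- (y ord0 true)%:M)
           (- (y ord0 false)%:M) (Mq (yl y) z + (y ord0 false)%:M).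
Proof.
apply/matrixP => i j.
case: (split_ordP i) => a ->; case: (split_ordP j) => b ->.
- rewrite block_mxEul [LHS]mxE eq_lshift diagL !mxE.
  by case: eqP => [->|_]; rewrite ?mulr1n ?mulr0n ?addr0 ?addrA ?WqLL.
- rewrite block_mxEur [LHS]mxE eq_lrshift WqLR !mxE.
  by case: eqP => _; rewrite ?mulr1n ?mulr0n ?oppr0.
- rewrite block_mxEdl [LHS]mxE eq_rlshift WqRL !mxE.
  by case: eqP => _; rewrite ?mulr1n ?mulr0n ?oppr0.
- rewrite block_mxEdr [LHS]mxE eq_rshift diagR !mxE.
  by case: eqP => [->|_]; rewrite ?mulr1n ?mulr0n ?addr0 ?addrA ?WqRR.
Qed.
End Block.

Lemma det_block2 (R : comPzRingType) n (X : 'M[R]_n) (a b : R) :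
  \det (block_mx (X + a%:M) (- a%:M) (- b%:M) (X + b%:M)) = \det X * \det (X + (a + b)%:M).
Proof.
set A := block_mx _ _ _ _.
have E : block_mx 1%:M (- 1%:M) 0 1%:M *m (A *m block_mx 1%:M 1%:M 0 1%:M)
         = block_mx (X + (a + b)%:M) 0 (- b%:M) X.
  have e1 : - b%:M + (X + b%:M) = X by rewrite addrCA addNr addr0.
  rewrite /A !mulmx_block !mulmx1 !mul1mx !mulmx0 !mul0mx !addr0 !add0r e1.
  rewrite !mulNmx !mul1mx opprK addrK subrr.
  by rewrite raddfD addrA.
have := congr1 determinant E.
rewrite !det_mulmx !det_ublock !det1 !mulr1 !mul1r => ->.
by rewrite det_lblock mulrC.
Qed.

Section Prod.
Variable R : comPzRingType.

Definition Pq k (y : 'I_k -> bool -> R) (z : R) : R :=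
  \prod_(J : {set 'I_k}) (z + \sum_(i in J) (y i false + y i true)).

Lemma P_cube k (y : 'I_k -> bool -> R) z :
  Pq y z = \prod_(c : cube k) (z + \sum_(i | c i) (y i false + y i true)).
Proof.
rewrite /Pq (reindex (fun c : cube k => [set i | c i])) /=; last first.
  apply: onW_bij; exists (fun J : {set 'I_k} => [ffun i => i \in J]).
    by move=> c; apply/ffunP => i; rewrite ffunE inE.
  by move=> J; apply/setP => i; rewrite inE ffunE.
by apply: eq_bigr => c _; congr (_ + _); apply: eq_bigl => i; rewrite inE.
Qed.

Lemma sum_ext k (s : 'I_k.+1 -> R) (c : cube k) b :
  \sum_(i | ext c b i) s i = (if b then s ord0 else 0) + \sum_(j | c j) s (lift ord0 j).
Proof.
rewrite big_mkcond big_ord_recl ext0 [in RHS]big_mkcond; congr (_ + _).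
by apply: eq_bigr => j _; rewrite extL.
Qed.

Lemma P_rec k (y : 'I_k.+1 -> bool -> R) z :
  Pq y z = Pq (yl y) z * Pq (yl y) (z + (y ord0 false + y ord0 true)).
Proof.
rewrite !P_cube (reindex (fun q : cube k * bool => ext q.1 q.2)) /=; last first.
  apply: onW_bij; exists (fun c : cube k.+1 => (tl c, c ord0)).
    by case=> c b /=; rewrite tl_ext ext0.
  by move=> c; rewrite ext_tl.
rewrite (eq_bigl (fun q : cube k * bool => xpredT q.1 && xpredT q.2)) //.
rewrite -(pair_big xpredT xpredT (fun c b => z + \sum_(i | ext c b i) (y i false + y i true))) /=.
under eq_bigr => c _ do rewrite big_bool /= !sum_ext /= add0r.
rewrite big_split /= mulrC; congr (_ * _).
by apply: eq_bigr => c _; rewrite addrA.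
Qed.
End Prod.

Lemma det_Mq (R : comPzRingType) k (y : 'I_k -> bool -> R) (z : R) :
  \det (Mq y z) = Pq y z.
Proof.
elim: k y z => [|k IH] y z.
  rewrite det_mx11 /Mq mxE eqxx big_pred0 => [|u]; last by rewrite (ord1 u) eqxx.
  rewrite addr0 /Pq (big_pred1 set0) => [|J]; first by rewrite big_set0 addr0.
  by rewrite /= (_ : J = set0) ?eqxx //; apply/setP => -[].
rewrite Mq_block det_block2 P_rec !IH.
have := IH (yl y) (z + (y ord0 true + y ord0 false)); rewrite /Mq -Mx_shift => ->.
by rewrite (addrC (y ord0 true)).
Qed.



Theorem corollary6p1 (k : nat) (hk : (0 < k)%N) (R : comPzRingType)
  (z : R) (y : 'I_k -> bool -> R) :
  \sum_(f : {ffun cube k -> option (cube k)} | spanning_oriented_forest f)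
     forest_weight z y f
  = \prod_(J : {set 'I_k}) (z + \sum_(i in J) (y i false + y i true)).
Proof.
rewrite lhs_Fs -(Fs_transfer (@psiK k) (@phiK k)) -forest_det.
exact: det_Mq.
Qed.
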